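(* Let $k,n$ be positive integers with $k\leqslant n$ and let $Y\subseteq\mathrm{Conf}_k([n])$ be an order ideal with respect to the Bruhat order. Then every linear extension of $Y$ is a flag shelling order.
   Context: $[n]:=\{1,\ldots,n\}$. $[n]^i_<$ denotes the set of $i$-element subsets of $[n]$, identified with increasing $i$-tuples; its Bruhat order is $u\leqslant v$ iff $u_j\leqslant v_j$ for all $j\in[i]$. $\mathrm{Conf}_k([n])$ is the set of $k$-tuples $(a_1,\ldots,a_k)$ of pairwise distinct elements of $[n]$. For $x\in\mathrm{Conf}_k([n])$ and $i\in[k]$, $P^{(i)}(x)\in[n]^i_<$ is the increasing rearrangement of $\{x_1,\ldots,x_i\}$. The Bruhat order on $\mathrm{Conf}_k([n])$ is $x\leqslant y$ iff $P^{(i)}(x)\leqslant P^{(i)}(y)$ for all $i\in[k]$. An order ideal is a subset $Y$ with $y\in Y$, $x\leqslant y$ implying $x\in Y$. A linear extension of $Y$ is a tuple $(L_1,\ldots,L_h)$ listing each element of $Y$ exactly once such that $L_i<L_j$ implies $i<j$. For $y\in\mathrm{Conf}_k([n])$ let $P(y):=\{P^{(1)}(y),\ldots,P^{(k)}(y)\}$ (a $k$-element set whose elements are subsets of $[n]$). A sequence $(F_1,\ldots,F_h)$ of distinct $k$-element sets is a shelling order if for all $i<j$ there exists $z<j$ with $|F_z\cap F_j|=|F_j|-1$ and $F_i\cap F_j\subseteq F_z\cap F_j$. A tuple $(a_1,\ldots,a_h)$ listing the elements of $Y$ is a flag shelling order for $Y$ if $(P(a_1),\ldots,P(a_h))$ is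 a shelling order (of the simplicial complex with facets $\{P(y):y\in Y\}$). *)

(* Defs.v *)
(* [n] = {1,...,n} is modelled by 'I_n = {0,...,n-1}
   (an order-preserving relabelling i |-> i-1). *)
From mathcomp Require Import all_boot all_order.
Set Implicit Arguments.
Unset Strict Implicit.
Unset Printing Implicit Defensive.

Section FlagShelling.
Variables (k n : nat).

Definition conf (x : k.-tuple 'I_n) : bool := uniq x.

Definition incr (A : {set 'I_n}) : seq nat :=
  sort leq [seq val a | a <- enum A].
Definition bruhat_sub (A B : {set 'I_n}) : bool :=
  all2 leq (incr A) (incr B).

Definition Pi (x : k.-tuple 'I_n) (i : nat) : {set 'I_n} :=
  [set tnth x j | j : 'I_k & j < i].

Definition bruhat_le (x y : k.-tuple 'I_n) : bool :=
  [forall i : 'I_k, bruhat_sub (Pi x i.+1) (Pi y i.+1)].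
Definition bruhat_lt (x y : k.-tuple 'I_n) : bool :=
  (x != y) && bruhat_le x y.

Definition order_ideal (Y : {set k.-tuple 'I_n}) : Prop :=
  (forall y, y \in Y -> conf y) /\
  (forall x y, conf x -> y \in Y -> bruhat_le x y -> x \in Y).

Definition linear_extension (Y : {set k.-tuple 'I_n})
    (L : seq (k.-tuple 'I_n)) : Prop :=
  [/\ uniq L, (forall y, (y \in L) = (y \in Y)) &
      forall x y, x \in L -> y \in L -> bruhat_lt x y ->
        index x L < index y L].

Definition Pflag (y : k.-tuple 'I_n) : {set {set 'I_n}} :=
  [set Pi y i.+1 | i : 'I_k].

Definition shelling_cond (F : seq {set {set 'I_n}}) : Prop :=
  forall i j, i < j -> j < size F ->
    exists z, [/\ z < j,
      #|nth set0 F z :&: nth set0 F j| = #|nth set0 F j| - 1 &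
      nth set0 F i :&: nth set0 F j \subset nth set0 F z :&: nth set0 F j].

Definition shelling_order (F : seq {set {set 'I_n}}) : Prop :=
  [/\ uniq F, (forall A, A \in F -> #|A| = k) & shelling_cond F].

Definition flag_shelling_order (L : seq (k.-tuple 'I_n)) : Prop :=
  shelling_order [seq Pflag a | a <- L].
End FlagShelling.

(* Main.v *)
Require Import Defs.
From mathcomp Require Import all_boot all_order.
Set Implicit Arguments. Unset Strict Implicit. Unset Printing Implicit Defensive.

Lemma count_lt0 (b c : nat) s : c <= b -> all (fun m => b < m) s ->
  count (fun m => m < c) s = 0.
Proof.
move=> cb; elim: s => //= m s IH /andP[bm /IH ->].
have : ~~ (m < c) by rewrite -leqNgt; apply: leq_trans cb (ltnW bm).
by move/negbTE => ->.
Qed.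

Lemma cnt_all2 (s t : seq nat) : sorted ltn s -> sorted ltn t -> size s = size t ->
  (forall c, count (fun m => m < c) t <= count (fun m => m < c) s) -> all2 leq s t.
Proof.
elim: s t => [|a s IH] [|b t] //= ps pt [] st H.
have As : all (fun m => a < m) s by exact: (order_path_min ltn_trans ps).
have At : all (fun m => b < m) t by exact: (order_path_min ltn_trans pt).
have ab : a <= b.
  have := H a; rewrite ltnn (count_lt0 (leqnn a) As) /=.
  by case: ltnP => //.
rewrite ab /=; apply: IH => //.
- exact: path_sorted ps.
- exact: path_sorted pt.
move=> c; case: (leqP c b) => cb.
  by rewrite (count_lt0 cb At).
have := H c; rewrite cb (leq_ltn_trans ab cb) /= !add1n ltnS //.
Qed.

Section S.
Variable n : nat.

Definition cnt (A : {set 'I_n}) c := #|A :&: [set a : 'I_n | a < c]|.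

Lemma count_incr (A : {set 'I_n}) c : count (fun m => m < c) (incr A) = cnt A c.
Proof.
rewrite /incr /cnt.
have P : forall s : seq nat, perm_eq (sort leq s) s by move=> s; rewrite perm_sort perm_refl.
rewrite (permP (P _)) count_map cardE.
rewrite (perm_size (enum_setI _ _)) size_filter.
by apply: eq_count => a /=; rewrite !inE.
Qed.

Lemma incr_sorted (A : {set 'I_n}) : sorted ltn (incr A).
Proof.
rewrite ltn_sorted_uniq_leq sort_uniq map_inj_uniq ?enum_uniq; last exact: val_inj.
by rewrite sort_sorted //; exact: leq_total.
Qed.

Lemma size_incr (A : {set 'I_n}) : size (incr A) = #|A|.
Proof. by rewrite /incr size_sort size_map cardE. Qed.

Lemma bruhat_sub_refl (A : {set 'I_n}) : bruhat_sub A A.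
Proof. by rewrite /bruhat_sub; elim: (incr A) => //= a s ->; rewrite leqnn. Qed.

Lemma bruhat_sep (A B : {set 'I_n}) (v : nat) : #|A| = #|B| ->
  (forall u, u \in A -> u \notin B -> val u <= v) ->
  (forall u, u \in B -> u \notin A -> v < val u) -> bruhat_sub A B.
Proof.
move=> AB HA HB; apply: cnt_all2; rewrite ?incr_sorted ?size_incr //.
move=> c; rewrite !count_incr /cnt.
case: (leqP c v) => cv.
  apply: subset_leq_card; apply/subsetP => u; rewrite !inE => /andP[uB uc].
  rewrite uc andbT; apply/negPn/negP => uA.
  by have := HB u uB uA; rewrite ltnNge (leq_trans (ltnW uc) cv).
have E1 := cardsID [set a : 'I_n | a < c] A.
have E2 := cardsID [set a : 'I_n | a < c] B.
have : #|A :\: [set a : 'I_n | a < c]| <= #|B :\: [set a : 'I_n | a < c]|.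
  apply: subset_leq_card; apply/subsetP => u; rewrite !inE => /andP[uc uA].
  rewrite uc /=; apply/negPn/negP => uB.
  by have := HA u uA uB; rewrite leqNgt (leq_trans cv) // leqNgt.
rewrite -AB in E2; move: E1 E2; set a1 := #|_ :&: _|; set a2 := #|_ :&: _|.
move=> E1 E2 H. have : a2 + #|B :\: [set a : 'I_n | a < c]| <= a1 + #|B :\: [set a : 'I_n | a < c]|.
  by rewrite E2 -E1 leq_add2l.
by rewrite leq_add2r.
Qed.
End S.

Section T.
Variables (k n : nat).
Implicit Types (x y : k.-tuple 'I_n).

Lemma PiP x i a : reflect (exists2 j : 'I_k, j < i & tnth x j = a) (a \in Pi x i).
Proof.
apply: (iffP imsetP).
  by case=> j; rewrite inE => ji ->; exists j.
by case=> j ji <-; exists j; rewrite ?inE.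
Qed.

Lemma tnth_inj x : uniq x -> injective (tnth x).
Proof.
move=> ux j j' e; apply: val_inj; apply/eqP.
have Hj := ltn_ord j; have Hj' := ltn_ord j'.
rewrite -(nth_uniq (tnth x j) (s := x)) ?size_tuple //.
by rewrite -!tnth_nth e.
Qed.

Lemma Pi_mono x i i' : i <= i' -> Pi x i \subset Pi x i'.
Proof.
move=> ii; apply/subsetP => a /PiP [j ji <-]; apply/PiP; exists j => //.
exact: leq_trans ji ii.
Qed.

Lemma memPi x i a : (a \in Pi x i) = (a \in take i x).
Proof.
apply/PiP/idP.
  case=> j ji <-; rewrite (tnth_nth a) -(nth_take _ ji); apply: mem_nth.
  rewrite size_take size_tuple; case: ifP => // _; exact: ltn_ord.
move=> H.
have lt : index a (take i x) < minn i k.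
  by have := H; rewrite -index_mem size_take size_tuple /minn.
have jk : index a (take i x) < k by apply: leq_trans lt (geq_minr _ _).
have ji : index a (take i x) < i by apply: leq_trans lt (geq_minl _ _).
exists (Ordinal jk) => //.
by rewrite (tnth_nth a) /= -(nth_take _ ji) nth_index.
Qed.

Lemma card_Pi x i : uniq x -> i <= k -> #|Pi x i| = i.
Proof.
move=> ux ik.
have -> : Pi x i = [set a in take i x] by apply/setP => a; rewrite inE memPi.
rewrite cardsE.
have /card_uniqP -> := take_uniq i ux.
by rewrite size_takel // size_tuple.
Qed.

Lemma Pi_k x : Pi x k = [set a in x].
Proof.
by apply/setP => a; rewrite memPi inE take_oversize // size_tuple.
Qed.

Lemma notin_Pi x (j : 'I_k) : uniq x -> tnth x j \notin Pi x j.
Proof.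
move=> ux; apply/PiP => [[j' jj /(tnth_inj ux) e]].
by move: jj; rewrite e ltnn.
Qed.

Lemma Pi_eq_tuple x y : uniq x -> uniq y -> (forall i, i <= k -> Pi x i = Pi y i) -> x = y.
Proof.
move=> ux uy H; apply: eq_from_tnth => j.
have : tnth x j \in Pi y j.+1 by rewrite -H //; apply/PiP; exists j.
case/PiP => j' jj e.
case: (ltnP j' j) => jl.
  have : tnth x j \in Pi x j by rewrite H ?(ltnW (ltn_ord j)) //; apply/PiP; exists j'.
  by rewrite (negbTE (notin_Pi j ux)).
rewrite -e; congr (tnth y _); apply: val_inj; apply/eqP; rewrite eqn_leq jl -ltnS andbT //.
Qed.

Lemma Pflag_mem x y i : uniq x -> uniq y -> 0 < i <= k ->
  (Pi x i \in Pflag y) = (Pi x i == Pi y i).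
Proof.
move=> ux uy /andP[i0 ik]; apply/imsetP/eqP.
  case=> j _ e; have := card_Pi ux ik; rewrite e card_Pi // => ei.
  by rewrite ei.
move=> e; have ik' : i.-1 < k by rewrite prednK.
by exists (Ordinal ik') => //=; rewrite prednK.
Qed.

Lemma PflagP y A : reflect (exists2 i, 0 < i <= k & A = Pi y i) (A \in Pflag y).
Proof.
apply: (iffP imsetP).
  by case=> j _ ->; exists j.+1 => //; rewrite ltn_ord.
case=> i /andP[i0 ik] ->; have ik' : i.-1 < k by rewrite prednK.
by exists (Ordinal ik') => //=; rewrite prednK.
Qed.

Lemma card_Pflag y : uniq y -> #|Pflag y| = k.
Proof.
move=> uy; rewrite card_imset ?card_ord // => j j' e.
have h1 := card_Pi uy (ltn_ord j); have h2 := card_Pi uy (ltn_ord j').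
rewrite e h2 in h1; apply: val_inj; by case: h1.
Qed.

Lemma Pflag_inj x y : uniq x -> uniq y -> Pflag x = Pflag y -> x = y.
Proof.
move=> ux uy e; apply: Pi_eq_tuple => // i ik.
case: i ik => [|i] ik.
  by apply/setP => a; rewrite !memPi !take0.
apply/eqP; rewrite -Pflag_mem // -e; apply/imsetP; exists (Ordinal ik) => //.
Qed.

Lemma Pi_ceq x y i j : uniq x -> uniq y -> 0 < i <= k -> 0 < j <= k -> Pi x i = Pi y j -> i = j.
Proof.
move=> ux uy /andP[_ ik] /andP[_ jk] e.
by rewrite -(card_Pi ux ik) e card_Pi.
Qed.

Lemma neighbor x y y' i0 : uniq x -> uniq y -> uniq y' -> 0 < i0 <= k ->
  (forall i, 0 < i <= k -> i != i0 -> Pi y' i = Pi y i) ->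
  Pi y' i0 != Pi y i0 -> Pi x i0 != Pi y i0 ->
  #|Pflag y' :&: Pflag y| = #|Pflag y| - 1 /\
  Pflag x :&: Pflag y \subset Pflag y' :&: Pflag y.
Proof.
move=> ux uy uy' hi0 Heq Hne Hx.
have E : Pflag y' :&: Pflag y = Pflag y :\ Pi y i0.
  apply/setP => A; rewrite !inE; apply/andP/andP.
    case=> /PflagP [i hi ->] /PflagP [i' hi' e].
    have ei := Pi_ceq uy' uy hi hi' e; subst i'.
    split; last by apply/PflagP; exists i.
    apply/negP => /eqP e2.
    have ei := Pi_ceq uy' uy hi hi0 e2; subst i.
    by rewrite e2 eqxx in Hne.
  case=> ne /PflagP [i hi eA]; split; last by apply/PflagP; exists i.
  apply/PflagP; exists i => //; rewrite eA Heq //.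
  by apply/negP => /eqP ei; subst i; rewrite eA eqxx in ne.
split.
  have H0 : Pi y i0 \in Pflag y by apply/PflagP; exists i0.
  by rewrite E (cardsD1 (Pi y i0) (Pflag y)) H0 add1n subn1.
rewrite E; apply/subsetP => A; rewrite !inE => /andP[/PflagP [i hi ->] /PflagP [i' hi' e]].
have ei := Pi_ceq ux uy hi hi' e; subst i'.
rewrite e; apply/andP; split; last by apply/PflagP; exists i.
apply/negP => /eqP e2.
have ei := Pi_ceq uy uy hi hi0 e2; subst i.
by rewrite e eqxx in Hx.
Qed.
End T.

Lemma chain (f : nat -> nat) q m : q <= m ->
  (forall r, q <= r -> r < m -> f r < f r.+1) -> f q <= f m.
Proof.
elim: m => [|m IH]; first by rewrite leqn0 => /eqP ->.
rewrite leq_eqVlt => /orP[/eqP -> //| qm] H.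
apply: leq_trans (ltnW (H m _ _)) => //; apply: IH => // r qr rm.
by apply: H => //; apply: ltnW.
Qed.

Lemma chain_lt (f : nat -> nat) q m : q < m ->
  (forall r, q <= r -> r < m -> f r < f r.+1) -> f q < f m.
Proof.
case: m => // m; rewrite ltnS => qm H.
apply: leq_ltn_trans (chain qm _) (H m qm _) => //.
by move=> r qr rm; apply: H => //; apply: ltnW.
Qed.

Section M.
Variables (k n : nat).
Implicit Types (x y : k.-tuple 'I_n).

Lemma main_c x y (d : 'I_n) : uniq x -> uniq y -> 0 < k ->
  (forall r, r.+1 < k -> Pi x r.+1 != Pi y r.+1 ->
     val (nth d y r) < val (nth d y r.+1)) ->
  (Pi x k != Pi y k -> forall u : 'I_n, val u < val (nth d y k.-1) -> u \in Pi y k.-1) ->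
  bruhat_le y x.
Proof.
move=> ux uy k0 H1 H2; apply/forallP => i.
set f := fun r => val (nth d y r).
have ik := ltn_ord i.
apply: (@bruhat_sep _ _ _ (f i)).
- by rewrite !card_Pi.
- move=> u /PiP [q qi <-] uX.
  rewrite (tnth_nth d); change (f q <= f i); apply: (chain (f := f)); first by rewrite -ltnS.
  move=> r qr ri; apply: H1; first by apply: leq_ltn_trans ri ik.
  apply/negP => /eqP e.
  have : tnth y q \in Pi y r.+1 by apply/PiP; exists q => //; rewrite ltnS.
  have hri : r.+1 <= i.+1 by rewrite ltnS ltnW.
  by rewrite -e => /(subsetP (Pi_mono x hri)); rewrite (negbTE uX).
- move=> u uX uY.
  have Dr : forall r, i <= r -> r < k -> u \notin Pi y r.+1 -> Pi x r.+1 != Pi y r.+1.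
    move=> r ir rk uYr; apply/negP => /eqP e.
    have hir : i.+1 <= r.+1 by rewrite ltnS.
    by have := subsetP (Pi_mono x hir) u uX; rewrite e (negbTE uYr).
  case: (boolP (u \in y)) => [/tnthP [s es] | uy'].
  + have si : i < s.
      rewrite ltnNge; apply/negP => si; move: uY; rewrite es => /negP; apply.
      by apply/PiP; exists s.
    rewrite es (tnth_nth d); change (f i < f s); apply: (chain_lt (f := f)) => // r ir rs.
    apply: H1; first by apply: leq_ltn_trans rs (ltn_ord s).
    apply: Dr => //; first by apply: ltn_trans rs (ltn_ord s).
    apply/PiP => [[j jr ej]].
    have := tnth_inj uy (etrans ej es) => ejs.
    by move: jr; rewrite ejs ltnS leqNgt rs.
  + have notY : forall r, u \notin Pi y r.
      by move=> r; apply/negP; rewrite memPi => /mem_take; apply/negP.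
    have fk : f i <= f k.-1.
      apply: chain; first by rewrite -ltnS prednK.
      move=> r ir rk; apply: H1; first by rewrite -ltnS -[k]prednK in rk *.
      apply: Dr => //; last exact: leq_trans rk (leq_pred k).
    apply: leq_ltn_trans fk _.
    have Dk : Pi x k != Pi y k.
      have := Dr k.-1; rewrite prednK //; apply => //.
      by rewrite -ltnS prednK.
    rewrite ltnNge; apply/negP; rewrite leq_eqVlt => /orP[/eqP e | lt].
      have ek : k.-1 < k by rewrite prednK.
      move: uy'; rewrite /f in e; rewrite (val_inj e) -(tnth_nth d y (Ordinal ek)).
      by rewrite mem_tnth.
    by move: (H2 Dk u lt); rewrite (negbTE (notY _)).
Qed.
End M.

Section C.
Variables (k n : nat).
Implicit Types (x y : k.-tuple 'I_n).

Lemma le_from y' y i0 : 0 < i0 <= k ->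
  (forall i, 0 < i <= k -> i != i0 -> Pi y' i = Pi y i) ->
  bruhat_sub (Pi y' i0) (Pi y i0) -> bruhat_le y' y.
Proof.
move=> hi0 H B; apply/forallP => i.
case: (eqVneq i.+1 i0) => [e|ne]; first by rewrite e.
by rewrite H ?ltn_ord ?bruhat_sub_refl.
Qed.

Lemma swap_move y (p q : 'I_k) : uniq y -> val q = p.+1 ->
  val (tnth y q) < val (tnth y p) ->
  exists y' : k.-tuple 'I_n, [/\ uniq y', (forall i : nat, i != q -> Pi y' i = Pi y i),
     Pi y' q != Pi y q & bruhat_le y' y].
Proof.
move=> uy eq desc.
pose sw (j : 'I_k) := if j == p then q else if j == q then p else j.
have pq : p != q.
  apply/eqP => e; have h := congr1 val e; rewrite /= eq in h; exact: (n_Sn _ h).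
have qp : q != p by rewrite eq_sym.
have swp : sw p = q by rewrite /sw eqxx.
have swq : sw q = p by rewrite /sw (negbTE qp) eqxx.
have swo : forall j, j != p -> j != q -> sw j = j.
  by move=> j jp jq; rewrite /sw (negbTE jp) (negbTE jq).
have swK : forall j, sw (sw j) = j.
  move=> j; case: (eqVneq j p) => [->|jp]; first by rewrite swp swq.
  case: (eqVneq j q) => [->|jq]; first by rewrite swq swp.
  by rewrite !swo.
have sw_lt : forall (i : nat) j, i != q -> (sw j < i) = (j < i).
  move=> i j iq.
  case: (eqVneq j p) => [->|jp]; first rewrite swp.
    by rewrite eq ltn_neqAle -eq eq_sym iq.
  case: (eqVneq j q) => [->|jq]; first rewrite swq.
    by apply/esym; rewrite eq ltn_neqAle -eq eq_sym iq.
  by rewrite swo.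
pose y' := [tuple tnth y (sw j) | j < k].
have ty : forall j, tnth y' j = tnth y (sw j) by move=> j; rewrite tnth_mktuple.
have uy' : uniq y'.
  apply/tuple_uniqP => j j'; rewrite !ty => /(tnth_inj uy) e.
  by rewrite -(swK j) e swK.
have Heq : forall i : nat, i != q -> Pi y' i = Pi y i.
  move=> i iq; apply/setP => a; apply/PiP/PiP.
    by case=> j ji; rewrite ty => <-; exists (sw j); rewrite ?sw_lt.
  case=> j ji <-; exists (sw j); first by rewrite sw_lt.
  by rewrite ty swK.
have pltq : p < q by rewrite eq.
exists y'; split => //.
  apply/negP => /eqP e.
  have : tnth y p \in Pi y q by apply/PiP; exists p.
  rewrite -e => /PiP [j jq]; rewrite ty => /(tnth_inj uy) e2.
  have ejq : j = q by rewrite -(swK j) e2 swp.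
  by move: jq; rewrite ejq ltnn.
have q0 : 0 < q <= k by apply/andP; split; [rewrite eq | exact: ltnW (ltn_ord q)].
apply: (le_from q0 (fun i _ iq => Heq i iq)).
apply: (@bruhat_sep _ _ _ (val (tnth y q))).
- by rewrite !card_Pi // ltnW.
- move=> u /PiP [j jq]; rewrite ty => <- nin.
  case: (eqVneq j p) => [->|jp]; first by rewrite swp.
  have jq' : j != q by apply/negP => /eqP e; move: jq; rewrite e ltnn.
  move: nin; rewrite swo // => /negP []; apply/PiP; exists j => //.
- move=> u /PiP [j jq] <- nin.
  case: (eqVneq j p) => [->|jp] //.
  have jq' : j != q by apply/negP => /eqP e; move: jq; rewrite e ltnn.
  move: nin => /negP []; apply/PiP; exists j => //; rewrite ty swo //.
Qed.

Lemma last_move y (l : 'I_k) (u0 : 'I_n) : uniq y -> val l = k.-1 ->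
  val u0 < val (tnth y l) -> u0 \notin Pi y l ->
  exists y' : k.-tuple 'I_n, [/\ uniq y', (forall i : nat, i < k -> Pi y' i = Pi y i),
     Pi y' k != Pi y k & bruhat_le y' y].
Proof.
move=> uy el lt nin.
have k0 : 0 < k := leq_ltn_trans (leq0n l) (ltn_ord l).
pose y' := [tuple if j == l then u0 else tnth y j | j < k].
have ty : forall j, tnth y' j = if j == l then u0 else tnth y j by move=> j; rewrite tnth_mktuple.
have jl : forall j : 'I_k, j != l -> j < l.
  move=> j jne; rewrite ltn_neqAle val_eqE jne /= el -ltnS prednK //.
have inl : forall j : 'I_k, j != l -> tnth y j \in Pi y l.
  by move=> j jne; apply/PiP; exists j => //; apply: jl.
have uy' : uniq y'.
  apply/tuple_uniqP => j j'; rewrite !ty.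
  case: (eqVneq j l) => [->|jn]; case: (eqVneq j' l) => [->|jn'] //.
  - by move=> e; move: nin; rewrite e inl.
  - by move=> e; move: nin; rewrite -e inl.
  - exact: tnth_inj.
have Heq : forall i : nat, i < k -> Pi y' i = Pi y i.
  move=> i ik.
  have jnl : forall j : 'I_k, j < i -> j != l.
    move=> j ji; apply/negP => /eqP e; move: ji; rewrite e el => h.
    by move: h; rewrite prednK // leqNgt ik.
  apply/setP => a; apply/PiP/PiP.
    by case=> j ji; rewrite ty (negbTE (jnl j ji)) => <-; exists j.
  by case=> j ji <-; exists j => //; rewrite ty (negbTE (jnl j ji)).
have u0Y : u0 \notin Pi y k.
  apply/negP => /PiP [j _ e]; case: (eqVneq j l) => [ejl|jn].
    by move: lt; rewrite -e ejl ltnn.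
  by move: nin; rewrite -e inl.
have u0Y' : u0 \in Pi y' k by apply/PiP; exists l => //; rewrite ty eqxx.
exists y'; split => //.
  by apply/negP => /eqP e; move: u0Y; rewrite -e u0Y'.
have kk : 0 < k <= k by rewrite k0 leqnn.
apply: (le_from kk).
  move=> i /andP[_ ik] ne; apply: Heq; by rewrite ltn_neqAle ne ik.
apply: (@bruhat_sep _ _ _ (val u0)).
- by rewrite !card_Pi.
- move=> w /PiP [j _]; rewrite ty; case: (eqVneq j l) => [_ <- //|jn <-].
  by move=> /negP []; apply/PiP; exists j.
- move=> w /PiP [j _ <-]; case: (eqVneq j l) => [-> //|jn].
  by move=> /negP []; apply/PiP; exists j => //; rewrite ty (negbTE jn).
Qed.
End C.
Unset Implicit Arguments.

Theorem theorem4p5 (k n : nat) (hk : 0 < k) (hkn : k <= n)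
    (Y : {set k.-tuple 'I_n}) (hY : order_ideal Y)
    (L : seq (k.-tuple 'I_n)) (hL : linear_extension Y L) :
  flag_shelling_order L.
Proof.
case: hY => hYc hYi; case: hL => uL memL ext.
have a0 : 'I_n := Ordinal (leq_trans hk hkn).
pose d0 : k.-tuple 'I_n := [tuple a0 | j < k].
have uLe : forall y, y \in L -> uniq y by move=> y yL; apply: hYc; rewrite -memL.
split.
- rewrite map_inj_in_uniq // => x y xL yL; apply: Pflag_inj; exact: uLe.
- by move=> A /mapP [y yL ->]; rewrite card_Pflag // uLe.
move=> i j ij; rewrite size_map => jL.
have iL : i < size L by apply: ltn_trans ij jL.
rewrite !(nth_map d0) //.
set x := nth d0 L i; set y := nth d0 L j.
have xL : x \in L by apply: mem_nth.
have yL : y \in L by apply: mem_nth.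
have ux := uLe x xL; have uy := uLe y yL.
have yY : y \in Y by rewrite -memL.
have ij' : i != j by rewrite neq_ltn ij.
have xy : x != y by rewrite /x /y nth_uniq.
have idy : index y L = j by rewrite /y index_uniq.
have idx : index x L = i by rewrite /x index_uniq.
have fin : forall (y' : k.-tuple 'I_n) i0, uniq y' -> 0 < i0 <= k ->
    (forall i, 0 < i <= k -> i != i0 -> Pi y' i = Pi y i) ->
    Pi y' i0 != Pi y i0 -> Pi x i0 != Pi y i0 -> bruhat_le y' y ->
    exists z, [/\ z < j,
      #|nth set0 [seq Pflag a | a <- L] z :&: Pflag y| = #|Pflag y| - 1 &
      Pflag x :&: Pflag y \subset nth set0 [seq Pflag a | a <- L] z :&: Pflag y].
  move=> y' i0 uy' hi0 Heq ne nx le.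
  have y'Y : y' \in Y by apply: (hYi y' y) => //.
  have y'L : y' \in L by rewrite memL.
  have ny : y' != y by apply/negP => /eqP e; rewrite e eqxx in ne.
  have lt : index y' L < index y L by apply: ext => //; rewrite /bruhat_lt ny.
  exists (index y' L); rewrite (nth_map d0) ?index_mem // nth_index //.
  rewrite -idy; have [h1 h2] := neighbor ux uy uy' hi0 Heq ne nx; by split.
case: (boolP [exists p : 'I_k, exists q : 'I_k,
   [&& val q == p.+1, Pi x q != Pi y q & val (tnth y q) < val (tnth y p)]]).
  case/existsP => p /existsP [q /and3P [/eqP e D desc]].
  have [y' [uy' Heq ne le]] := swap_move uy e desc.
  apply: (fin y' q) => //.
  - by apply/andP; split; [rewrite e | exact: ltnW (ltn_ord q)].
  - by move=> i' _ /Heq.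
move=> nA.
case: (boolP [exists l : 'I_k, exists u0 : 'I_n,
   [&& val l == k.-1, Pi x k != Pi y k, val u0 < val (tnth y l) & u0 \notin Pi y l]]).
  case/existsP => l /existsP [u0 /and4P [/eqP e D lt nin]].
  have [y' [uy' Heq ne le]] := last_move uy e lt nin.
  apply: (fin y' k) => //.
  - by rewrite hk leqnn.
  - by move=> i' /andP[_ ik] nk; apply: Heq; rewrite ltn_neqAle nk ik.
move=> nB.
have H1 : forall r, r.+1 < k -> Pi x r.+1 != Pi y r.+1 ->
     val (nth a0 y r) < val (nth a0 y r.+1).
  move=> r rk D.
  have rk' : r < k by apply: ltnW.
  move/existsPn: nA => /(_ (Ordinal rk')) /existsPn /(_ (Ordinal rk)).
  rewrite /= eqxx D /= -leqNgt !(tnth_nth a0) /=.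
  rewrite leq_eqVlt => /orP [/eqP e|] //.
  have s1 : r < size y by rewrite size_tuple.
  have s2 : r.+1 < size y by rewrite size_tuple.
  have := nth_uniq a0 s1 s2 uy; rewrite (val_inj e) eqxx => /esym /eqP /n_Sn [].
have H2 : Pi x k != Pi y k -> forall u : 'I_n, val u < val (nth a0 y k.-1) -> u \in Pi y k.-1.
  move=> D u lt.
  have lk : k.-1 < k by rewrite prednK.
  move/existsPn: nB => /(_ (Ordinal lk)) /existsPn /(_ u).
  by rewrite /= eqxx D (tnth_nth a0) lt /= negbK.
have le := main_c ux uy hk H1 H2.
have h : index y L < index x L by apply: ext => //; rewrite /bruhat_lt eq_sym xy.
by move: h; rewrite idx idy ltnNge (ltnW ij).
Qed.
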